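(* Let $s_\theta$ be the Sturmian word of irrational slope $\theta\in(0,1)$, let $1\le k\le m$, let $P_k=(p_1,\dots,p_k)$ be an ordered partition of $m$, and let $s_0=0$, $s_\ell=p_1+\dots+p_\ell$ ($1\le\ell\le k$). Let $0=q'_0<q'_1<\dots<q'_k$ be the $k+1$ points $\{-s_0\theta\},\{-s_1\theta\},\dots,\{-s_k\theta\}$ arranged in increasing order, and set $q'_{k+1}=1$. Let $\lambda_0,\dots,\lambda_k$ be the $k+1$ varieties of $\mathcal{L}_{(m,k)}$ listed in the order inherited from the lexicographic order of the underlying factors. Then for each $0\le j\le k$, a factor $u\in\mathcal{L}_m$ belongs (as a partitioned factor) to $\lambda_j$ if and only if $J_u\subseteq[q'_j,q'_{j+1})$; equivalently, the occurrence of a length-$m$ factor at position $n$ is of variety $\lambda_j$ iff $\{n\theta\}\in[q'_j,q'_{j+1})$. Consequently $Fr(\lambda_j)=q'_{j+1}-q'_j$.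
   Context: For irrational $\theta\in(0,1)$, $s_\theta=s_0s_1\cdots$ is the infinite word over $\{a<b\}$ with $s_n=a$ if $\{n\theta\}\in I_a=[0,1-\theta)$ and $s_n=b$ if $\{n\theta\}\in I_b=[1-\theta,1)$, $\{x\}$ the fractional part. $\mathcal{L}_m$ is the set of factors of length $m$. $\mathcal{L}_{(m,k)}$ is the set of factorizations $u=u_1\cdots u_k$, $|u_i|=p_i$, $u\in\mathcal{L}_m$; the height profile is $\langle|u_1|_b,\dots,|u_k|_b\rangle$, and varieties are classes of equal height profile; each variety consists of lexicographically consecutive factors, which gives the inherited order. $R(x)=\{x+\theta\}$ on the circle $[0,1)$; for a factor $u=r_0\cdots r_{m-1}$, $J_u=\bigcap_{i=0}^{m-1}R^{-i}(I_{r_i})$ ($I_r=I_a$ or $I_b$ as $r=a$ or $b$), and $u$ occurs at position $n$ iff $\{n\theta\}\in J_u$. The frequency of a variety is $Fr(\lambda)=\lim_{N\to\infty}\mu_N/N$, where $\mu_N$ is the number of occurrences in the length-$N$ prefix of $s_\theta$ of length-$m$ factors whose $P_k$-partitioned form belongs to $\lambda$. *)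

(* Defs.v *)
From Stdlib Require Import Reals List Arith ZArith.
Open Scope R_scope.

(* Letters: false = a, true = b, with a < b. *)

Definition irrational (x : R) : Prop :=
  forall (p q : Z), (q <> 0)%Z -> x <> IZR p / IZR q.

Definition fracR (x : R) : R := frac_part x.

Definition inI (theta : R) (r : bool) (x : R) : Prop :=
  if r then 1 - theta <= x < 1 else 0 <= x < 1 - theta.

Definition sturm (theta : R) (n : nat) : bool :=
  if Rlt_dec (fracR (INR n * theta)) (1 - theta) then false else true.

Definition factorAt (theta : R) (m n : nat) : list bool :=
  map (sturm theta) (seq n m).

Definition inLang (theta : R) (m : nat) (u : list bool) : Prop :=
  exists n : nat, u = factorAt theta m n.

Definition countB (u : list bool) : nat :=
  length (filter (fun c : bool => c) u).

Fixpoint heightProfile (P : list nat) (u : list bool) : list nat :=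
  match P with
  | nil => nil
  | p :: P' => countB (firstn p u) :: heightProfile P' (skipn p u)
  end.

Fixpoint lexlt (u v : list bool) : Prop :=
  match u, v with
  | nil, nil => False
  | nil, _ :: _ => True
  | _ :: _, nil => False
  | x :: u', y :: v' => (x = false /\ y = true) \/ (x = y /\ lexlt u' v')
  end.

Definition orderedPartition (m : nat) (P : list nat) : Prop :=
  (forall p, In p P -> (1 <= p)%nat) /\ fold_right Nat.add 0%nat P = m.

Definition partialSum (P : list nat) (l : nat) : nat :=
  fold_right Nat.add 0%nat (firstn l P).

Definition rot (theta x : R) : R := fracR (x + theta).

Definition inJ (theta : R) (u : list bool) (x : R) : Prop :=
  0 <= x < 1 /\
  forall i : nat, (i < length u)%nat ->
    inI theta (nth i u false) (Nat.iter i (rot theta) x).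

Definition J_sub (theta : R) (u : list bool) (a b : R) : Prop :=
  forall x, inJ theta u x -> a <= x < b.

Definition sortedPoints (theta : R) (P : list nat) (q : nat -> R) : Prop :=
  let k := length P in
  (forall j, (j < k)%nat -> q j < q (S j)) /\
  (forall j, (j <= k)%nat -> exists l, (l <= k)%nat /\
        q j = fracR (- (INR (partialSum P l) * theta))) /\
  (forall l, (l <= k)%nat -> exists j, (j <= k)%nat /\
        q j = fracR (- (INR (partialSum P l) * theta))) /\
  q (S k) = 1.

(* h_0, ..., h_k : the height profiles of the k+1 varieties of L_(m,k),
   listed in the order inherited from the lexicographic order of factors *)
Definition varietyListing (theta : R) (m : nat) (P : list nat)
    (h : nat -> list nat) : Prop :=
  let k := length P in
  (forall j, (j <= k)%nat -> exists u, inLang theta m u /\ heightProfile P u = h j) /\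
  (forall u, inLang theta m u -> exists j, (j <= k)%nat /\ heightProfile P u = h j) /\
  (forall j j' u v, (j < j')%nat -> (j' <= k)%nat ->
     inLang theta m u -> inLang theta m v ->
     heightProfile P u = h j -> heightProfile P v = h j' -> lexlt u v).

Definition occCount (theta : R) (m : nat) (P : list nat) (hj : list nat)
    (N : nat) : nat :=
  length (filter (fun n => if list_eq_dec Nat.eq_dec
                               (heightProfile P (factorAt theta m n)) hj
                           then true else false)
                 (seq 0 (N + 1 - m))).

Definition hasFrequency (theta : R) (m : nat) (P : list nat) (hj : list nat)
    (f : R) : Prop :=
  Un_cv (fun N => INR (occCount theta m P hj N) / INR N) f.

(* Main.v *)
Require Import Defs.
From Stdlib Require Import Reals List Arith ZArith Lia Lra.
From Stdlib Require Import IndefiniteDescription.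
Open Scope R_scope.


Definition fl (x : R) : Z := Int_part x.

Lemma fl_spec x : IZR (fl x) <= x < IZR (fl x) + 1.
Proof. unfold fl; destruct (base_Int_part x); lra. Qed.

Lemma fl_unique x z : IZR z <= x < IZR z + 1 -> fl x = z.
Proof.
  intros H. destruct (fl_spec x) as [H1 H2].
  assert (A: (fl x < z + 1)%Z) by (apply lt_IZR; rewrite plus_IZR; lra).
  assert (B: (z < fl x + 1)%Z) by (apply lt_IZR; rewrite plus_IZR; lra).
  lia.
Qed.

Lemma frac_eq x : fracR x = x - IZR (fl x).
Proof. reflexivity. Qed.

Lemma frac_range x : 0 <= fracR x < 1.
Proof. rewrite frac_eq; destruct (fl_spec x); lra. Qed.

Lemma fl_shift x z : fl (x + IZR z) = (fl x + z)%Z.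
Proof. apply fl_unique; rewrite plus_IZR; destruct (fl_spec x); lra. Qed.

Lemma frac_shift x z : fracR (x + IZR z) = fracR x.
Proof. rewrite !frac_eq, fl_shift, plus_IZR; ring. Qed.

Lemma fl_unit x : 0 <= x < 1 -> fl x = 0%Z.
Proof. intros; apply fl_unique; simpl; lra. Qed.

Lemma frac_unit x : 0 <= x < 1 -> fracR x = x.
Proof. intros; rewrite frac_eq, fl_unit by auto; simpl; lra. Qed.

Lemma fl_add x y : fl (x + y) =
  (fl x + fl y + (if Rlt_dec (fracR x + fracR y) 1 then 0 else 1))%Z.
Proof.
  apply fl_unique. pose proof (frac_range x); pose proof (frac_range y).
  rewrite !frac_eq in *.
  destruct (Rlt_dec _ _); rewrite !plus_IZR; simpl; lra.
Qed.

Lemma frac_neg0 y : fracR y = 0 -> fracR (- y) = 0.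
Proof.
  intros H. rewrite frac_eq in H. replace (-y) with (0 + IZR (- fl y)).
  rewrite frac_shift, frac_unit; lra. rewrite opp_IZR; lra.
Qed.

Lemma frac_neg1 y : fracR y <> 0 -> fracR (- y) = 1 - fracR y.
Proof.
  intros H. pose proof (frac_range y) as R0. rewrite frac_eq in H, R0. rewrite (frac_eq y).
  replace (-y) with ((1 - (y - IZR (fl y))) + IZR (- fl y - 1)).
  rewrite frac_shift, frac_unit; lra. rewrite minus_IZR, opp_IZR; simpl; lra.
Qed.

Lemma nat_big r : exists N : nat, r < INR N.
Proof.
  destruct (Rle_dec r 0). exists 1%nat; simpl; lra.
  destruct (archimed r) as [H _].
  assert (0 < up r)%Z by (apply lt_IZR; simpl; lra).
  exists (Z.to_nat (up r)). rewrite INR_IZR_INZ, Z2Nat.id by lia. lra.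
Qed.

Lemma my_choice (A : Type) (P : nat -> A -> Prop) :
  (forall j, exists a, P j a) -> exists f, forall j, P j (f j).
Proof.
  intros H. exists (fun j => proj1_sig (constructive_indefinite_description _ (H j))).
  intros j. exact (proj2_sig (constructive_indefinite_description _ (H j))).
Qed.


Definition letter (theta x : R) : bool := if Rlt_dec x (1 - theta) then false else true.

Fixpoint code (theta x : R) (m : nat) : list bool :=
  match m with O => nil | S m' => letter theta x :: code theta (rot theta x) m' end.

Lemma rot_range theta x : 0 <= rot theta x < 1.
Proof. apply frac_range. Qed.

Lemma rot_decomp theta x : 0 < theta < 1 -> 0 <= x < 1 ->
  x + theta = rot theta x + (if letter theta x then 1 else 0).
Proof.
  intros Ht Hx. unfold rot, letter. destruct (Rlt_dec x (1 - theta)).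
  - rewrite frac_unit by lra. lra.
  - replace (fracR (x + theta)) with (fracR ((x + theta - 1) + IZR 1)) by (f_equal; simpl; ring).
    rewrite frac_shift, frac_unit by lra. lra.
Qed.

Lemma rot_xn theta n : rot theta (fracR (INR n * theta)) = fracR (INR (S n) * theta).
Proof.
  unfold rot. rewrite (frac_eq (INR n * theta)), S_INR.
  replace (INR n * theta - IZR (fl (INR n * theta)) + theta)
    with ((INR n + 1) * theta + IZR (- fl (INR n * theta))) by (rewrite opp_IZR; ring).
  apply frac_shift.
Qed.

Lemma factorAt_code theta m n : factorAt theta m n = code theta (fracR (INR n * theta)) m.
Proof.
  unfold factorAt. revert n; induction m; intros n; simpl; auto.
  rewrite rot_xn, <- IHm. reflexivity.
Qed.

Lemma countB_cons b l : countB (b :: l) = ((if b then 1 else 0) + countB l)%nat.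
Proof. unfold countB; destruct b; reflexivity. Qed.

Lemma countB_app l1 l2 : countB (l1 ++ l2) = (countB l1 + countB l2)%nat.
Proof. unfold countB. rewrite filter_app, length_app. reflexivity. Qed.

Lemma countB_code theta x s : 0 < theta < 1 -> 0 <= x < 1 ->
  Z.of_nat (countB (code theta x s)) = fl (x + INR s * theta).
Proof.
  intros Ht. revert x; induction s; intros x Hx.
  - simpl. rewrite fl_unit; auto; lra.
  - simpl code. rewrite countB_cons, Nat2Z.inj_add, IHs by apply rot_range.
    rewrite S_INR.
    replace (x + (INR s + 1) * theta) with (rot theta x + INR s * theta +
       IZR (if letter theta x then 1 else 0)%Z).
    2:{ pose proof (rot_decomp theta x Ht Hx). destruct (letter theta x); simpl in *; lra. }
    rewrite fl_shift. destruct (letter theta x); [change (Z.of_nat 1) with 1%Z|change (Z.of_nat 0) with 0%Z]; lia.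
Qed.

Lemma code_app theta x a b :
  code theta x (a + b) = code theta x a ++ code theta (Nat.iter a (rot theta) x) b.
Proof.
  revert x; induction a; intros x; simpl; auto.
  rewrite IHa, <- Nat.iter_succ_r. reflexivity.
Qed.

Lemma code_length theta x m : length (code theta x m) = m.
Proof. revert x; induction m; simpl; auto. Qed.

Lemma iter_rot_range theta i x : 0 <= x < 1 -> 0 <= Nat.iter i (rot theta) x < 1.
Proof. destruct i; simpl; auto. intros; apply rot_range. Qed.

Lemma inI_letter theta r y : 0 <= y < 1 -> (inI theta r y <-> r = letter theta y).
Proof.
  intros Hy; unfold inI, letter. destruct (Rlt_dec y (1 - theta)); destruct r; split;
  intros; try lra; try discriminate; auto.
Qed.

Lemma inJ_code theta u x : inJ theta u x <-> (0 <= x < 1 /\ code theta x (length u) = u).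
Proof.
  unfold inJ. split; intros [Hx H]; split; auto.
  - revert x Hx H. induction u as [|c u IH]; intros x Hx H; simpl; auto.
    assert (H0 := H 0%nat ltac:(simpl; lia)). simpl in H0.
    apply inI_letter in H0; auto. rewrite <- H0. f_equal.
    apply IH. apply rot_range. intros i Hi.
    rewrite <- Nat.iter_succ_r. apply (H (S i)). simpl; lia.
  - revert x Hx H. induction u as [|c u IH]; intros x Hx H i Hi; simpl in *. lia.
    injection H as H1 H2. destruct i; simpl.
    + apply inI_letter; auto.
    + change (inI theta (nth i u false) (Nat.iter (S i) (rot theta) x)).
      rewrite Nat.iter_succ_r.
      apply IH; auto. apply rot_range. lia.
Qed.

Lemma lexlt_irrefl u : lexlt u u -> False.
Proof. induction u as [|a u IH]; simpl; auto. intros [[H1 H2]|[_ H]]; [congruence|auto]. Qed.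

Lemma lexlt_asym u v : lexlt u v -> lexlt v u -> False.
Proof.
  revert v; induction u as [|a u IH]; destruct v as [|b v]; simpl; auto.
  intros [[? ?]|[? ?]] [[? ?]|[? ?]]; subst; try discriminate; eauto.
Qed.

Lemma code_mono theta m x y : 0 < theta < 1 -> 0 <= x -> x < y -> y < 1 ->
  code theta x m <> code theta y m -> lexlt (code theta x m) (code theta y m).
Proof.
  intros Ht. revert x y; induction m; intros x y H0 Hxy H1 Hne; simpl in *. congruence.
  unfold letter in *. destruct (Rlt_dec x (1 - theta)); destruct (Rlt_dec y (1 - theta)).
  - right; split; auto. apply IHm.
    + apply rot_range.
    + unfold rot. rewrite !frac_unit by lra. lra.
    + apply rot_range.
    + intro E; apply Hne. rewrite E; auto.
  - left; auto.
  - lra.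
  - right; split; auto. apply IHm.
    + apply rot_range.
    + unfold rot.
      replace (x + theta) with ((x + theta - 1) + IZR 1) by (simpl; ring).
      replace (y + theta) with ((y + theta - 1) + IZR 1) by (simpl; ring).
      rewrite !frac_shift, !frac_unit by lra. lra.
    + apply rot_range.
    + intro E; apply Hne. rewrite E; auto.
Qed.


Definition sumP (P : list nat) : nat := fold_right Nat.add 0%nat P.
Definition Cx theta x s := countB (code theta x s).
Definition prof theta P x := heightProfile P (code theta x (sumP P)).

Lemma hp_cons theta x p P :
  heightProfile (p :: P) (code theta x (p + sumP P)) =
  Cx theta x p :: heightProfile P (code theta (Nat.iter p (rot theta) x) (sumP P)).
Proof.
  simpl. rewrite code_app, firstn_app, skipn_app, code_length, Nat.sub_diag.
  rewrite firstn_all2 by (rewrite code_length; lia).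
  rewrite skipn_all2 by (rewrite code_length; lia).
  simpl. rewrite app_nil_r. reflexivity.
Qed.

Lemma Cx_app theta x a b : Cx theta x (a + b) = (Cx theta x a + Cx theta (Nat.iter a (rot theta) x) b)%nat.
Proof. unfold Cx. rewrite code_app, countB_app. reflexivity. Qed.

Lemma hp_prefix theta P x l :
  fold_right Nat.add 0%nat (firstn l (prof theta P x)) = Cx theta x (partialSum P l).
Proof.
  unfold prof, partialSum. revert x l; induction P as [|p P IH]; intros x l.
  - simpl. rewrite !firstn_nil. reflexivity.
  - change (sumP (p :: P)) with (p + sumP P)%nat. rewrite hp_cons.
    destruct l; simpl. reflexivity.
    rewrite IH. rewrite Cx_app. reflexivity.
Qed.

Lemma hp_eq_of_C theta P x y :
  (forall l, Cx theta x (partialSum P l) = Cx theta y (partialSum P l)) ->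
  prof theta P x = prof theta P y.
Proof.
  unfold prof, partialSum. revert x y; induction P as [|p P IH]; intros x y H.
  - reflexivity.
  - change (sumP (p :: P)) with (p + sumP P)%nat. rewrite !hp_cons.
    assert (E1 := H 1%nat). simpl in E1. rewrite Nat.add_0_r in E1.
    rewrite E1. f_equal. apply IH. intros l.
    assert (E := H (S l)). simpl in E. rewrite !Cx_app in E. lia.
Qed.

Lemma C_formula theta x s : 0 < theta < 1 -> 0 <= x < 1 ->
  Z.of_nat (Cx theta x s) = (fl (INR s * theta) +
     (if Rlt_dec (x + fracR (INR s * theta)) 1 then 0 else 1))%Z.
Proof.
  intros Ht Hx. unfold Cx. rewrite countB_code by auto.
  rewrite fl_add, fl_unit, frac_unit by auto. lia.
Qed.

Lemma C_eq_iff theta x y s : 0 < theta < 1 -> 0 <= x < 1 -> 0 <= y < 1 ->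
  (x + fracR (INR s * theta) < 1 <-> y + fracR (INR s * theta) < 1) ->
  Cx theta x s = Cx theta y s.
Proof.
  intros Ht Hx Hy Hiff. apply Nat2Z.inj. rewrite !C_formula by auto.
  destruct (Rlt_dec (x + _) 1); destruct (Rlt_dec (y + _) 1); try tauto; lia.
Qed.

Lemma C_neq theta x y s : 0 < theta < 1 -> 0 <= x < 1 -> 0 <= y < 1 ->
  x + fracR (INR s * theta) < 1 -> ~ (y + fracR (INR s * theta) < 1) ->
  Cx theta x s <> Cx theta y s.
Proof.
  intros Ht Hx Hy H1 H2 E. apply (f_equal Z.of_nat) in E. rewrite !C_formula in E by auto.
  destruct (Rlt_dec (x + _) 1); destruct (Rlt_dec (y + _) 1); try tauto; lia.
Qed.

Lemma q_facts theta P q : 0 < theta < 1 -> sortedPoints theta P q ->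
  (forall j, (j <= length P)%nat -> 0 <= q j < 1) /\
  (forall j, (j <= length P)%nat -> q j < q (S j)) /\
  q 0%nat = 0 /\ q (S (length P)) = 1.
Proof.
  intros Ht [Hinc [Hpts [Hall H1]]].
  assert (Hr : forall j, (j <= length P)%nat -> 0 <= q j < 1).
  { intros j Hj. destruct (Hpts j Hj) as [l [_ ->]]. apply frac_range. }
  assert (Hs : forall j, (j <= length P)%nat -> q j < q (S j)).
  { intros j Hj. destruct (Nat.eq_dec j (length P)). subst; rewrite H1; apply Hr; lia.
    apply Hinc; lia. }
  split; auto. split; auto. split; auto.
  assert (Hm : forall i d, (i + d <= S (length P))%nat -> q i <= q (i + d)%nat).
  { intros i d; induction d; intros H. rewrite Nat.add_0_r; lra.
    rewrite Nat.add_succ_r. specialize (IHd ltac:(lia)). assert (q (i+d)%nat < q (S (i + d))) by (apply Hs; lia). lra. }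
  destruct (Hall 0%nat ltac:(lia)) as [j [Hj Ej]].
  unfold partialSum in Ej. simpl in Ej. rewrite Rmult_0_l, Ropp_0 in Ej.
  rewrite frac_unit in Ej by lra.
  pose proof (Hm 0%nat j ltac:(lia)). simpl in H. pose proof (Hr 0%nat ltac:(lia)). lra.
Qed.

Lemma q_mono theta P q : 0 < theta < 1 -> sortedPoints theta P q ->
  forall i j, (i <= j)%nat -> (j <= S (length P))%nat -> q i <= q j.
Proof.
  intros Ht Hq. destruct (q_facts theta P q Ht Hq) as [_ [Hs _]].
  assert (Hm : forall i d, (i + d <= S (length P))%nat -> q i <= q (i + d)%nat).
  { intros i d; induction d; intros H. rewrite Nat.add_0_r; lra.
    rewrite Nat.add_succ_r. specialize (IHd ltac:(lia)). assert (q (i+d)%nat < q (S (i + d))) by (apply Hs; lia). lra. }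
  intros i j Hij Hj. replace j with (i + (j - i))%nat by lia. apply Hm; lia.
Qed.

Definition inIv (q : nat -> R) j x := q j <= x < q (S j).

Lemma locate theta P q x : 0 < theta < 1 -> sortedPoints theta P q -> 0 <= x < 1 ->
  exists j, (j <= length P)%nat /\ inIv q j x.
Proof.
  intros Ht Hq Hx. destruct (q_facts theta P q Ht Hq) as [_ [_ [H0 H1]]].
  assert (forall t, (t <= length P)%nat -> x < q (S t) -> exists j, (j <= t)%nat /\ inIv q j x).
  { induction t; intros Ht' Hlt. exists 0%nat; split; auto; unfold inIv; lra.
    destruct (Rlt_dec x (q (S t))). destruct (IHt ltac:(lia) r) as [j [? ?]]. exists j; split; auto.
    exists (S t); split; auto. unfold inIv; lra. }
  destruct (H (length P) ltac:(lia) ltac:(lra)) as [j [? ?]]. exists j; split; auto.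
Qed.

Lemma inIv_unique theta P q j j' x : 0 < theta < 1 -> sortedPoints theta P q ->
  (j <= length P)%nat -> (j' <= length P)%nat -> inIv q j x -> inIv q j' x -> j = j'.
Proof.
  intros Ht Hq Hj Hj' [A B] [C D]. destruct (lt_eq_lt_dec j j') as [[?|?]|?]; auto.
  - pose proof (q_mono theta P q Ht Hq (S j) j' ltac:(lia) ltac:(lia)). lra.
  - pose proof (q_mono theta P q Ht Hq (S j') j ltac:(lia) ltac:(lia)). lra.
Qed.

Lemma inIv_range theta P q j x : 0 < theta < 1 -> sortedPoints theta P q ->
  (j <= length P)%nat -> inIv q j x -> 0 <= x < 1.
Proof.
  intros Ht Hq Hj [A B]. destruct (q_facts theta P q Ht Hq) as [Hr [_ [_ H1]]].
  pose proof (Hr j Hj). pose proof (q_mono theta P q Ht Hq (S j) (S (length P)) ltac:(lia) ltac:(lia)). lra.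
Qed.

Lemma ps_cap P l : (length P <= l)%nat -> partialSum P l = partialSum P (length P).
Proof. intros; unfold partialSum. rewrite firstn_all2, firstn_all by lia. reflexivity. Qed.

Lemma sameprof theta P q j x y : 0 < theta < 1 -> sortedPoints theta P q ->
  (j <= length P)%nat -> inIv q j x -> inIv q j y -> prof theta P x = prof theta P y.
Proof.
  intros Ht Hq Hj Ix Iy.
  pose proof (inIv_range _ _ _ _ _ Ht Hq Hj Ix). pose proof (inIv_range _ _ _ _ _ Ht Hq Hj Iy).
  assert (Hl : forall l, (l <= length P)%nat -> Cx theta x (partialSum P l) = Cx theta y (partialSum P l)).
  { intros l Hl. apply C_eq_iff; auto.
    destruct Hq as [Hinc [Hpts [Hall H1]]].
    destruct (Hall l Hl) as [i [Hi Ei]].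
    set (yy := INR (partialSum P l) * theta) in *.
    destruct (Req_dec (fracR yy) 0) as [E|E].
    - rewrite E. lra.
    - rewrite frac_neg1 in Ei by auto.
      assert (Hq' : sortedPoints theta P q) by (repeat split; auto).
      destruct Ix, Iy.
      destruct (le_lt_dec i j).
      + pose proof (q_mono theta P q Ht Hq' i j ltac:(lia) ltac:(lia)). split; intros; lra.
      + pose proof (q_mono theta P q Ht Hq' (S j) i ltac:(lia) ltac:(lia)). split; intros; lra. }
  apply hp_eq_of_C. intros l. destruct (le_lt_dec l (length P)). auto.
  rewrite ps_cap by lia. apply Hl; auto.
Qed.

Lemma diffprof_lt theta P q j j' x y : 0 < theta < 1 -> sortedPoints theta P q ->
  (j < j')%nat -> (j' <= length P)%nat -> inIv q j x -> inIv q j' y ->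
  prof theta P x <> prof theta P y.
Proof.
  intros Ht Hq Hjj Hj' Ix Iy E.
  pose proof (inIv_range theta P q j x Ht Hq ltac:(lia) Ix). pose proof (inIv_range theta P q j' y Ht Hq Hj' Iy).
  destruct (q_facts theta P q Ht Hq) as [Hr [_ [Hq0 _]]].
  pose proof (q_mono theta P q Ht Hq 0 j ltac:(lia) ltac:(lia)).
  pose proof (q_mono theta P q Ht Hq (S j) j' ltac:(lia) ltac:(lia)).
  destruct Hq as [Hinc [Hpts [Hall Hq1]]].
  destruct (Hpts j' Hj') as [l [Hl El]].
  set (yy := INR (partialSum P l) * theta) in *.
  destruct Ix, Iy.
  destruct (Req_dec (fracR yy) 0) as [F|F].
  - rewrite frac_neg0 in El by auto. lra.
  - rewrite frac_neg1 in El by auto.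
    apply (C_neq theta x y (partialSum P l)); auto. fold yy; lra. fold yy; lra.
    rewrite <- !hp_prefix. rewrite E. reflexivity.
Qed.

Lemma diffprof theta P q j j' x y : 0 < theta < 1 -> sortedPoints theta P q ->
  (j <= length P)%nat -> (j' <= length P)%nat -> j <> j' -> inIv q j x -> inIv q j' y ->
  prof theta P x <> prof theta P y.
Proof.
  intros Ht Hq Hj Hj' Hne Ix Iy. destruct (Nat.lt_gt_cases j j') as [[H|H] _]; auto.
  eapply diffprof_lt; eauto.
  intro E; symmetry in E; revert E; eapply diffprof_lt; eauto.
Qed.


Fixpoint sumR (f : nat -> R) (M : nat) : R :=
  match M with O => 0 | S M' => sumR f M' + f M' end.

Lemma sumR_ext f g M : (forall n, (n < M)%nat -> f n = g n) -> sumR f M = sumR g M.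
Proof. induction M; simpl; intros H; auto. rewrite IHM, H; auto. Qed.

Lemma sumR_minus f g M : sumR (fun n => f n - g n) M = sumR f M - sumR g M.
Proof. induction M; simpl; try rewrite IHM; ring. Qed.

Lemma sumR_const c M : sumR (fun _ => c) M = INR M * c.
Proof. induction M; simpl sumR; try rewrite IHM; rewrite ?S_INR; simpl; ring. Qed.

Lemma sumR_shift G s : sumR (fun i => G (S i)) s = sumR G s + G s - G 0%nat.
Proof. induction s; simpl; try rewrite IHs; ring. Qed.

Lemma Rabs_def2b a b : Rabs a <= b -> - b <= a <= b.
Proof. unfold Rabs; destruct (Rcase_abs a); intros; lra. Qed.

Lemma sumR_bound g c M : (forall n, (n < M)%nat -> Rabs (g n - c) <= 1) ->
  Rabs (sumR g M - INR M * c) <= INR M.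
Proof.
  induction M; intros H; simpl sumR. simpl. rewrite Rmult_0_l, Rminus_0_r, Rabs_R0; lra.
  rewrite S_INR. specialize (IHM (fun n Hn => H n ltac:(lia))). specialize (H M ltac:(lia)).
  apply Rabs_le. apply Rabs_def2b in IHM; apply Rabs_def2b in H. lra.
Qed.

Definition xs theta n := fracR (INR n * theta).
Definition Fl theta n := IZR (fl (INR n * theta)).

Lemma sum_tel theta s M :
  sumR (fun n => Fl theta (n + s) - Fl theta n) M =
  sumR (fun i => Fl theta (M + i) - Fl theta i) s.
Proof.
  induction M; simpl sumR.
  - rewrite (sumR_ext _ (fun _ => 0)). rewrite sumR_const; ring. intros; simpl; ring.
  - rewrite IHM. rewrite !sumR_minus.
    rewrite (sumR_ext (fun i => Fl theta (S M + i)) (fun i => Fl theta (M + S i))) by (intros; f_equal; lia).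
    rewrite (sumR_shift (fun i => Fl theta (M + i))). rewrite Nat.add_0_r. ring.
Qed.

Lemma Fl_diff theta M i : 0 < theta < 1 ->
  Rabs (Fl theta (M + i) - Fl theta i - INR M * theta) <= 1.
Proof.
  intros Ht. unfold Fl. pose proof (fl_spec (INR (M + i) * theta)). pose proof (fl_spec (INR i * theta)).
  rewrite plus_INR in *. apply Rabs_le. lra.
Qed.

Lemma e_formula theta s n :
  Fl theta (n + s) - Fl theta n - IZR (fl (INR s * theta)) =
  (if Rlt_dec (xs theta n + fracR (INR s * theta)) 1 then 0 else 1).
Proof.
  unfold Fl, xs. rewrite plus_INR, Rmult_plus_distr_r, fl_add, !plus_IZR.
  destruct (Rlt_dec _ _); simpl; ring.
Qed.

Definition ind_ge theta y n := if Rle_dec y (xs theta n) then 1 else 0.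

Lemma xs_range theta n : 0 <= xs theta n < 1.
Proof. apply frac_range. Qed.

Lemma approx_ge theta P q i : 0 < theta < 1 -> sortedPoints theta P q -> (i <= S (length P))%nat ->
  exists K, forall M, Rabs (sumR (ind_ge theta (q i)) M - INR M * (1 - q i)) <= K.
Proof.
  intros Ht Hq Hi. destruct (q_facts theta P q Ht Hq) as [Hr [_ [_ H1]]].
  destruct (Nat.eq_dec i (S (length P))) as [->|Hne].
  - exists 0. intros M. rewrite H1. rewrite (sumR_ext _ (fun _ => 0)).
    rewrite sumR_const. rewrite Rminus_diag, Rmult_0_r, Rminus_0_r, Rabs_R0; lra.
    intros n _. unfold ind_ge. pose proof (xs_range theta n). destruct (Rle_dec _ _); lra.
  - destruct Hq as [Hinc [Hpts [Hall Hq1]]].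
    destruct (Hpts i ltac:(lia)) as [l [Hl El]].
    set (s := partialSum P l) in *.
    destruct (Req_dec (fracR (INR s * theta)) 0) as [F|F].
    + rewrite frac_neg0 in El by auto. exists 0. intros M. rewrite El.
      rewrite (sumR_ext _ (fun _ => 1)). rewrite sumR_const.
      rewrite Rminus_0_r, Rminus_diag, Rabs_R0; lra.
      intros n _. unfold ind_ge. pose proof (xs_range theta n). destruct (Rle_dec _ _); lra.
    + rewrite frac_neg1 in El by auto. exists (INR s). intros M.
      rewrite (sumR_ext _ (fun n => Fl theta (n + s) - Fl theta n - IZR (fl (INR s * theta)))).
      2:{ intros n _. rewrite e_formula. unfold ind_ge. rewrite El.
          destruct (Rle_dec _ _); destruct (Rlt_dec _ _); lra. }
      rewrite sumR_minus, sumR_const, sum_tel, El.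
      pose proof (sumR_bound (fun i => Fl theta (M + i) - Fl theta i) (INR M * theta) s
                    (fun i _ => Fl_diff theta M i Ht)).
      replace (sumR (fun i0 : nat => Fl theta (M + i0) - Fl theta i0) s -
                INR M * IZR (fl (INR s * theta)) - INR M * (1 - (1 - fracR (INR s * theta))))
        with (sumR (fun i0 : nat => Fl theta (M + i0) - Fl theta i0) s - INR s * (INR M * theta)).
      auto. rewrite frac_eq. ring.
Qed.


Definition tI theta (q : nat -> R) j n : bool :=
  if Rle_dec (q j) (xs theta n) then if Rlt_dec (xs theta n) (q (S j)) then true else false else false.

Lemma tI_spec theta q j n : tI theta q j n = true <-> inIv q j (xs theta n).
Proof.
  unfold tI, inIv. destruct (Rle_dec (q j) (xs theta n)); destruct (Rlt_dec (xs theta n) (q (S j))); split; intros; try discriminate; try tauto; lra.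
Qed.

Definition indI theta q j n : R := if tI theta q j n then 1 else 0.

Lemma count_filter (f : nat -> bool) M :
  INR (length (filter f (seq 0 M))) = sumR (fun n => if f n then 1 else 0) M.
Proof.
  induction M; simpl sumR. reflexivity.
  rewrite seq_S, filter_app, length_app, plus_INR, IHM. simpl.
  destruct (f M); simpl; ring.
Qed.

Lemma approx_I theta P q j : 0 < theta < 1 -> sortedPoints theta P q -> (j <= length P)%nat ->
  exists K, forall M, Rabs (sumR (indI theta q j) M - INR M * (q (S j) - q j)) <= K.
Proof.
  intros Ht Hq Hj.
  destruct (approx_ge theta P q j Ht Hq ltac:(lia)) as [K1 H1].
  destruct (approx_ge theta P q (S j) Ht Hq ltac:(lia)) as [K2 H2].
  destruct (q_facts theta P q Ht Hq) as [_ [Hs _]]. pose proof (Hs j Hj).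
  exists (K1 + K2). intros M.
  rewrite (sumR_ext _ (fun n => ind_ge theta (q j) n - ind_ge theta (q (S j)) n)).
  2:{ intros n _. unfold indI, tI, ind_ge. destruct (Rle_dec (q j) (xs theta n)); destruct (Rlt_dec (xs theta n) (q (S j)));
      destruct (Rle_dec (q (S j)) (xs theta n)); lra. }
  rewrite sumR_minus. specialize (H1 M). specialize (H2 M).
  apply Rabs_def2b in H1; apply Rabs_def2b in H2. apply Rabs_le. lra.
Qed.

Lemma sumR_pos_ex f M : 0 < sumR f M -> exists n, (n < M)%nat /\ f n <> 0.
Proof.
  induction M; simpl; intros H. lra.
  destruct (Req_dec (f M) 0) as [E|E].
  - destruct IHM as [n [? ?]]. lra. exists n; split; auto.
  - exists M; split; auto.
Qed.

Lemma exists_in_I theta P q j : 0 < theta < 1 -> sortedPoints theta P q -> (j <= length P)%nat ->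
  exists n, inIv q j (xs theta n).
Proof.
  intros Ht Hq Hj. destruct (approx_I theta P q j Ht Hq Hj) as [K HK].
  destruct (q_facts theta P q Ht Hq) as [_ [Hs _]]. pose proof (Hs j Hj).
  set (d := q (S j) - q j) in *.
  destruct (nat_big (K / d)) as [M HM].
  specialize (HK M). apply Rabs_def2b in HK.
  assert (INR M * d > K).
  { apply (Rmult_lt_compat_r d) in HM; [|unfold d; lra].
    unfold Rdiv in HM. rewrite Rmult_assoc, Rinv_l, Rmult_1_r in HM by (apply Rgt_not_eq; unfold d; lra). lra. }
  destruct (sumR_pos_ex (indI theta q j) M) as [n [_ Hn]]. lra.
  exists n. apply tI_spec. unfold indI in Hn. destruct (tI theta q j n); [reflexivity|lra].
Qed.

Lemma lim_lemma (S : nat -> R) d K m : (forall M, Rabs (S M - INR M * d) <= K) -> 0 <= d <= 1 ->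
  Un_cv (fun N => S (N + 1 - m)%nat / INR N) d.
Proof.
  intros H Hd eps He.
  assert (HK : 0 <= K) by (pose proof (H 0%nat); pose proof (Rabs_pos (S 0%nat - INR 0 * d)); lra).
  destruct (nat_big ((K + INR m + 1) / eps)) as [N1 HN1].
  exists (Nat.max N1 (m + 1)). intros n Hn. unfold R_dist.
  assert (Hn1 : (N1 <= n)%nat) by lia. assert (Hnm : (m + 1 <= n)%nat) by lia.
  apply le_INR in Hn1. apply le_INR in Hnm. rewrite plus_INR in Hnm. simpl in Hnm.
  pose proof (pos_INR m).
  specialize (H (n + 1 - m)%nat). rewrite minus_INR, plus_INR in H by lia. simpl in H.
  apply Rabs_def2b in H.
  assert (Hc : (K + INR m + 1) < eps * INR n).
  { apply (Rmult_lt_compat_r eps) in HN1; auto. unfold Rdiv in HN1.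
    rewrite Rmult_assoc, Rinv_l, Rmult_1_r in HN1 by (apply Rgt_not_eq; lra). nra. }
  set (t := S (n + 1 - m)%nat / INR n).
  assert (Et : S (n + 1 - m)%nat = t * INR n) by (unfold t; field; lra).
  rewrite Et in H. apply Rabs_def1; nra.
Qed.


Lemma hp_factor theta P n :
  heightProfile P (factorAt theta (sumP P) n) = prof theta P (xs theta n).
Proof. unfold prof. rewrite factorAt_code. reflexivity. Qed.

Lemma strict_id (r : nat -> nat) k : (forall j, (j <= k)%nat -> (r j <= k)%nat) ->
  (forall j j', (j < j')%nat -> (j' <= k)%nat -> (r j < r j')%nat) ->
  forall j, (j <= k)%nat -> r j = j.
Proof.
  intros Hb Hm.
  assert (A : forall j, (j <= k)%nat -> (j <= r j)%nat).
  { induction j; intros; [lia|]. pose proof (Hm j (S j) ltac:(lia) H). specialize (IHj ltac:(lia)). lia. }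
  assert (B : forall d, (d <= k)%nat -> (r (k - d) <= k - d)%nat).
  { induction d; intros. rewrite Nat.sub_0_r; apply Hb; lia.
    pose proof (Hm (k - S d)%nat (k - d)%nat ltac:(lia) ltac:(lia)). specialize (IHd ltac:(lia)). lia. }
  intros j Hj. pose proof (A j Hj). pose proof (B (k - j)%nat ltac:(lia)).
  replace (k - (k - j))%nat with j in * by lia. lia.
Qed.

Lemma listing_char theta P q h : 0 < theta < 1 -> sortedPoints theta P q ->
  varietyListing theta (sumP P) P h ->
  forall j, (j <= length P)%nat -> forall x, 0 <= x < 1 ->
    (prof theta P x = h j <-> inIv q j x).
Proof.
  intros Ht Hq [L1 [L2 L3]].
  set (k := length P) in *.
  assert (Hr : forall j, exists n, (j <= k)%nat -> prof theta P (xs theta n) = h j).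
  { intros j. destruct (le_lt_dec j k). destruct (L1 j l) as [u [[n ->] Hu]].
    exists n; intros _. rewrite <- hp_factor; auto. exists 0%nat; intros; lia. }
  destruct (my_choice _ _ Hr) as [rn Hrn].
  assert (Hi : forall j, exists i, (j <= k)%nat -> (i <= k)%nat /\ inIv q i (xs theta (rn j))).
  { intros j. destruct (locate theta P q (xs theta (rn j)) Ht Hq (xs_range _ _)) as [i [? ?]].
    exists i; auto. }
  destruct (my_choice _ _ Hi) as [r Hri].
  assert (Hstr : forall j j', (j < j')%nat -> (j' <= k)%nat -> (r j < r j')%nat).
  { intros j j' Hjj Hj'.
    destruct (Hri j ltac:(lia)) as [Hrj Ij]. destruct (Hri j' Hj') as [Hrj' Ij'].
    pose proof (Hrn j ltac:(lia)) as Pj. pose proof (Hrn j' Hj') as Pj'.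
    assert (Lx : lexlt (factorAt theta (sumP P) (rn j)) (factorAt theta (sumP P) (rn j'))).
    { apply (L3 j j'); auto. eexists; eauto. eexists; eauto. rewrite hp_factor; auto. rewrite hp_factor; auto. }
    destruct (lt_eq_lt_dec (r j) (r j')) as [[?|E]|G]; auto.
    - exfalso. assert (prof theta P (xs theta (rn j)) = prof theta P (xs theta (rn j'))).
      { apply (sameprof theta P q (r j)); auto. rewrite E; auto. }
      apply (lexlt_irrefl (factorAt theta (sumP P) (rn j))). apply (L3 j j'); auto.
      eexists; eauto. eexists; eauto. rewrite hp_factor; auto. rewrite hp_factor; congruence.
    - exfalso. rewrite !factorAt_code in Lx. fold (xs theta (rn j)) (xs theta (rn j')) in Lx.
      pose proof (diffprof theta P q (r j) (r j') _ _ Ht Hq Hrj Hrj' ltac:(lia) Ij Ij') as Dp.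
      destruct Ij as [A1 B1]. destruct Ij' as [A2 B2].
      pose proof (q_mono theta P q Ht Hq (S (r j')) (r j) ltac:(lia) ltac:(lia)).
      pose proof (xs_range theta (rn j')). pose proof (xs_range theta (rn j)).
      apply (lexlt_asym _ _ Lx). apply code_mono; try lra.
      intro E. apply Dp. unfold prof. rewrite E; auto. }
  assert (Hid : forall j, (j <= k)%nat -> r j = j).
  { apply strict_id; auto. intros j Hj; apply Hri; auto. }
  intros j Hj x Hx. destruct (Hri j Hj) as [_ Ij]. rewrite Hid in Ij by auto.
  rewrite <- (Hrn j Hj). split.
  - intros E. destruct (locate theta P q x Ht Hq Hx) as [i [Hik Ii]].
    destruct (Nat.eq_dec i j) as [->|Hne]; auto.
    exfalso. apply (diffprof theta P q i j x (xs theta (rn j)) Ht Hq Hik Hj Hne Ii Ij E).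
  - intros Ix. apply (sameprof theta P q j); auto.
Qed.


Theorem mainTheorem8 (theta : R) (m : nat) (P : list nat)
  (Htheta : 0 < theta < 1) (Hirr : irrational theta)
  (Hk : (1 <= length P)%nat) (Hkm : (length P <= m)%nat)
  (HP : orderedPartition m P)
  (q : nat -> R) (Hq : sortedPoints theta P q) :
  (exists h, varietyListing theta m P h) /\
  (forall h, varietyListing theta m P h ->
     forall j, (j <= length P)%nat ->
       (forall u, inLang theta m u ->
          (heightProfile P u = h j <-> J_sub theta u (q j) (q (S j)))) /\
       (forall n : nat,
          (heightProfile P (factorAt theta m n) = h j <->
           q j <= fracR (INR n * theta) < q (S j))) /\
       hasFrequency theta m P (h j) (q (S j) - q j)).
Proof.
  destruct HP as [_ Hm]. change (fold_right Nat.add 0%nat P) with (sumP P) in Hm. subst m.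
  set (k := length P) in *.
  split.
  - assert (Hex : forall j, exists n, (j <= k)%nat -> inIv q j (xs theta n)).
    { intros j. destruct (le_lt_dec j k).
      destruct (exists_in_I theta P q j Htheta Hq l) as [n Hn]. exists n; auto.
      exists 0%nat; intros; lia. }
    destruct (my_choice _ _ Hex) as [nj Hnj].
    exists (fun j => prof theta P (xs theta (nj j))). split; [|split].
    + intros j Hj. exists (factorAt theta (sumP P) (nj j)). split. eexists; eauto.
      apply hp_factor.
    + intros u [n ->]. destruct (locate theta P q (xs theta n) Htheta Hq (xs_range _ _)) as [j [Hj Ij]].
      exists j; split; auto. rewrite hp_factor. apply (sameprof theta P q j); auto.
    + intros j j' u v Hjj Hj' [n ->] [n' ->] Hu Hv. rewrite hp_factor in Hu, Hv.
      destruct (locate theta P q (xs theta n) Htheta Hq (xs_range _ _)) as [i [Hi Ii]].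
      destruct (locate theta P q (xs theta n') Htheta Hq (xs_range _ _)) as [i' [Hi' Ii']].
      assert (i = j).
      { destruct (Nat.eq_dec i j); auto. exfalso.
        apply (diffprof theta P q i j _ _ Htheta Hq Hi ltac:(lia) n0 Ii (Hnj j ltac:(lia))); auto. }
      assert (i' = j').
      { destruct (Nat.eq_dec i' j'); auto. exfalso.
        apply (diffprof theta P q i' j' _ _ Htheta Hq Hi' ltac:(lia) n0 Ii' (Hnj j' ltac:(lia))); auto. }
      subst i i'.
      pose proof (diffprof theta P q j j' _ _ Htheta Hq ltac:(lia) Hj' ltac:(lia) Ii Ii') as Dp.
      rewrite !factorAt_code. fold (xs theta n) (xs theta n').
      destruct Ii, Ii'.
      pose proof (q_mono theta P q Htheta Hq (S j) j' ltac:(lia) ltac:(lia)).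
      pose proof (xs_range theta n). pose proof (xs_range theta n').
      apply code_mono; try lra. intro E; apply Dp; unfold prof; rewrite E; auto.
  - intros h Hh j Hj.
    pose proof (listing_char theta P q h Htheta Hq Hh j Hj) as Ch.
    split; [|split].
    + intros u [n0 ->]. rewrite hp_factor. rewrite Ch by apply xs_range. split.
      * intros I0 x Hx. apply inJ_code in Hx. destruct Hx as [Hx E].
        rewrite factorAt_code, code_length in E.
        apply Ch; auto. rewrite <- (Ch (xs theta n0) (xs_range _ _)) in I0. rewrite <- I0.
        unfold prof. rewrite E. reflexivity.
      * intros J. apply J. apply inJ_code. split. apply xs_range.
        rewrite factorAt_code, code_length. reflexivity.
    + intros n. rewrite hp_factor, Ch by apply xs_range. reflexivity.
    + unfold hasFrequency, occCount.
      destruct (approx_I theta P q j Htheta Hq Hj) as [K HK].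
      destruct (q_facts theta P q Htheta Hq) as [Hr [Hs [_ H1]]].
      pose proof (Hs j Hj). pose proof (Hr j Hj).
      pose proof (q_mono theta P q Htheta Hq (S j) (S k) ltac:(lia) ltac:(lia)).
      eapply Un_cv_ext.
      2:{ apply (lim_lemma (sumR (indI theta q j)) _ K (sumP P)); auto. fold k in H1. lra. }
      intros N. simpl. f_equal.
      rewrite (filter_ext _ (tI theta q j)).
      * rewrite count_filter. apply sumR_ext. intros; reflexivity.
      * intros n. rewrite hp_factor. destruct (list_eq_dec _ _ _) as [E|E];
        destruct (tI theta q j n) eqn:T; auto.
        -- apply Ch in E. 2: apply xs_range. apply tI_spec in E. congruence.
        -- exfalso. apply E. apply Ch. apply xs_range. apply tI_spec; auto.
Qed.
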